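(* Let $R$ be a P$v$MD. Then: (1) If $I$ is a strong $t$-ideal of $R$, then $E(I)=S\cap T$, where $S=\bigcap_{P\in \mathrm{Min}(I)}R_P$ and $T=\bigcap\{R_M: M\in t\text{-Max}(R),\ M\not\supseteq I\}$. (2) If $P$ is a $t$-prime of $R$ which is not $t$-invertible, then $E(P)=(R:P)=R_P\cap T$, where $T=\bigcap\{R_M: M\in t\text{-Max}(R),\ M\not\supseteq P\}$. (3) If $P$ is a $t$-prime of $R$ which is not $t$-invertible and $R$ satisfies the ascending chain condition on radical $t$-ideals, then $P$ is a $t$-maximal ideal of the domain $E(P)$.
   Context: $R$ is an integral domain with quotient field $K\neq R$. For nonzero $R$-submodules $A,B$ of $K$, $(A:B)=\{x\in K: xB\subseteq A\}$; $E(I)=(I:I)$. For a nonzero fractional ideal $I$, $I_v=(R:(R:I))$, $I_t=\bigcup\{J_v: J\subseteq I\text{ nonzero finitely generated}\}$; $I$ is a $t$-ideal if $I=I_t$; a $t$-prime is a prime $t$-ideal; $t\text{-Max}(R)$ is the set of ideals maximal among proper $t$-ideals. $I$ is $t$-invertible if $(I(R:I))_t=R$. $R$ is a P$v$MD if $R_M$ is a valuation domain for every $M\in t\text{-Max}(R)$. An ideal $J$ is strong (a trace ideal) if $J=I(R:I)$ for some nonzero ideal $I$, equivalently $(J:J)=(R:J)$. $\mathrm{Min}(I)$ is the set of minimal primes of $I$. In (3), $t$-maximality in $E(P)$ refers to the $t$-operation of the domain $E(P)$. *)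

(* Defs.v *)
(* An integral domain R with quotient field K is modelled as a
   subring predicate R : K -> Prop of a field K such that every element of K is
   a quotient of elements of R.  R-submodules of K are predicates K -> Prop. *)
From HB Require Import structures.
From mathcomp Require Import all_boot all_order all_algebra.
Set Implicit Arguments. Unset Strict Implicit. Unset Printing Implicit Defensive.
Import Order.TTheory GRing.Theory Num.Theory.
Local Open Scope ring_scope.

Section Defs.
Variable K : fieldType.
Implicit Types (R D A B I J P M : K -> Prop).

Definition subset A B := forall x, A x -> B x.
Definition seteq A B := forall x, A x <-> B x.
Definition cap A B := fun x => A x /\ B x.

Definition is_subring R :=
  [/\ R 0, R 1, (forall x y, R x -> R y -> R (x - y)) &
      (forall x y, R x -> R y -> R (x * y))].

Definition is_quotient_field R :=
  forall x, exists a b, [/\ R a, R b, b != 0 & x = a / b].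

Definition submodule R A :=
  [/\ A 0, (forall x y, A x -> A y -> A (x + y)) &
      (forall r x, R r -> A x -> A (r * x))].

Definition nonzero A := exists x, A x /\ x != 0.

Definition ideal R I := submodule R I /\ subset I R.

Definition proper R I := exists x, R x /\ ~ I x.

Definition colon A B : K -> Prop := fun x => forall b, B b -> A (x * b).

Definition Eend I := colon I I.

Definition prod A B : K -> Prop := fun x =>
  exists (n : nat) (a b : nat -> K),
    (forall i, A (a i) /\ B (b i)) /\ x = \sum_(i < n) a i * b i.

Definition span R (s : seq K) : K -> Prop := fun x =>
  exists c : nat -> K, (forall i, R (c i)) /\ x = \sum_(i < size s) c i * s`_i.

Definition fin_gen R J := exists s : seq K, seteq J (span R s).

Definition vclos R I := colon R (colon R I).

Definition tclos R I : K -> Prop := fun x =>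
  exists J, [/\ fin_gen R J, nonzero J, subset J I & vclos R J x].

Definition t_ideal R I := [/\ ideal R I, nonzero I & seteq I (tclos R I)].

Definition prime_ideal R P :=
  [/\ ideal R P, proper R P &
      (forall x y, R x -> R y -> P (x * y) -> P x \/ P y)].

Definition t_prime R P := prime_ideal R P /\ t_ideal R P.

Definition t_max R M :=
  [/\ t_ideal R M, proper R M &
      (forall J, t_ideal R J -> proper R J -> subset M J -> subset J M)].

Definition t_invertible R I := seteq (tclos R (prod I (colon R I))) R.

Definition localization R P : K -> Prop := fun x =>
  exists a s, [/\ R a, R s, ~ P s & x = a / s].

Definition valuation_domain D := forall x, x != 0 -> D x \/ D x^-1.

Definition PvMD R := forall M, t_max R M -> valuation_domain (localization R M).

(* strong (trace) ideal: J = I (R:I) for some nonzero ideal I *)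
Definition strong R J :=
  ideal R J /\ exists I, [/\ ideal R I, nonzero I & seteq J (prod I (colon R I))].

Definition min_prime R I P :=
  [/\ prime_ideal R P, subset I P &
      (forall Q, prime_ideal R Q -> subset I Q -> subset Q P -> subset P Q)].

Definition S_min R I : K -> Prop := fun x =>
  forall P, min_prime R I P -> localization R P x.

Definition T_off R I : K -> Prop := fun x =>
  forall M, t_max R M -> ~ subset I M -> localization R M x.

Definition radical R I := forall x (n : nat), R x -> I (x ^+ n) -> I x.

Definition acc_radical_t R :=
  forall I : nat -> K -> Prop,
    (forall n, t_ideal R (I n) /\ radical R (I n)) ->
    (forall n, subset (I n) (I n.+1)) ->
    exists N, forall n, (N <= n)%N -> seteq (I n) (I N).

End Defs.

(* Main.v *)
Require Import Defs.
From mathcomp Require Import all_boot all_order all_algebra.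
From Stdlib Require Import Classical.
Set Implicit Arguments. Unset Strict Implicit. Unset Printing Implicit Defensive.
Import GRing.Theory.
Local Open Scope ring_scope.

Notation sub := Defs.subset.
Notation spn := Defs.span.
From mathcomp Require boolp classical_sets.
From mathcomp Require Import ring.
From Stdlib Require Import ClassicalEpsilon.
Lemma zorn_fam (T : Type) (fam : (T -> Prop) -> Prop) (A0 : T -> Prop) :
  fam A0 ->
  (forall F : (T -> Prop) -> Prop, (forall X, F X -> fam X) ->
     (forall X Y, F X -> F Y -> (forall x, X x -> Y x) \/ (forall x, Y x -> X x)) ->
     (exists X, F X) -> fam (fun x => exists X, F X /\ X x)) ->
  exists M, [/\ fam M, (forall x, A0 x -> M x) &
    (forall Y, fam Y -> (forall x, M x -> Y x) -> forall x, Y x -> M x)].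
Proof.
move=> h0 hch.
pose S := {X : T -> Prop | fam X /\ forall x, A0 x -> X x}.
pose t0 : S := exist _ A0 (conj h0 (fun x h => h)).
pose Rl (a b : S) := boolp.asbool (forall x, proj1_sig a x -> proj1_sig b x).
have [| | |t tmax] := @classical_sets.ZL_preorder S t0 Rl.
- by move=> a; apply/boolp.asboolP.
- move=> a b c /boolp.asboolP h1 /boolp.asboolP h2; apply/boolp.asboolP => x hx.
  by apply: h2; apply: h1.
- move=> A Atot.
  case: (classic (exists X, A X)) => [[X0 hX0]|hne]; last first.
    by exists t0 => s hs; exfalso; apply: hne; exists s.
  pose F := fun Y => exists X : S, A X /\ proj1_sig X = Y.
  have hF : fam (fun x => exists Y, F Y /\ Y x).
    apply: hch.
    - by move=> Y [X [_ <-]]; case: (proj2_sig X).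
    - move=> Y1 Y2 [X1 [h1 <-]] [X2 [h2 <-]].
      by case: (Atot _ _ h1 h2) => /boolp.asboolP h; [left|right].
    - by exists (proj1_sig X0), X0.
  have hA : forall x, A0 x -> (fun x => exists Y, F Y /\ Y x) x.
    move=> x hx; exists (proj1_sig X0); split; first by exists X0.
    by case: (proj2_sig X0) => _; apply.
  exists (exist (fun X => fam X /\ forall x, A0 x -> X x) _ (conj hF hA)) => s hs; apply/boolp.asboolP => x hx /=.
  by exists (proj1_sig s); split => //; exists s.
- exists (proj1_sig t); case: (proj2_sig t) => ht1 ht2; split => //.
  move=> Y hY hsub.
  have hA : forall x, A0 x -> Y x by move=> x /ht2 /hsub.
  have := tmax (exist _ Y (conj hY hA)).
  have -> : Rl t (exist _ Y (conj hY hA)) = true by apply/boolp.asboolP.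
  by move=> /(_ isT) /boolp.asboolP.
Qed.
Notation prp := Defs.proper.

Section Gen.
Variable K : fieldType.
Variable D : K -> Prop.
Hypothesis HD : is_subring D.

Lemma sr0 : D 0. Proof. by case: HD. Qed.
Lemma sr1 : D 1. Proof. by case: HD. Qed.
Lemma srB x y : D x -> D y -> D (x - y). Proof. by case: HD => _ _ h _; apply: h. Qed.
Lemma srM x y : D x -> D y -> D (x * y). Proof. by case: HD => _ _ _ h; apply: h. Qed.
Lemma srN x : D x -> D (- x). Proof. by move=> h; rewrite -sub0r; apply: srB => //; apply: sr0. Qed.
Lemma srD x y : D x -> D y -> D (x + y).
Proof. by move=> hx hy; rewrite -[y]opprK; apply: srB => //; apply: srN. Qed.
Lemma srX x n : D x -> D (x ^+ n).
Proof. move=> hx; elim: n => [|n IH]; first by rewrite expr0; apply: sr1. by rewrite exprS; apply: srM. Qed.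

Lemma span_nil x : spn D [::] x <-> x = 0.
Proof.
split; first by case=> c [_ ->]; rewrite big_ord0.
move=> ->; exists (fun _ => 0); split; first by move=> _; apply: sr0.
by rewrite big_ord0.
Qed.

Lemma span_cons a s x :
  spn D (a :: s) x <-> exists r y, [/\ D r, spn D s y & x = r * a + y].
Proof.
split.
  case=> c [Hc ->]; exists (c 0%N), (\sum_(i < size s) c i.+1 * s`_i); split => //.
    by exists (fun i => c i.+1); split.
  by rewrite /= big_ord_recl /=.
case=> r [y [Hr [c [Hc ->]] ->]].
exists (fun i => if i is k.+1 then c k else r); split; first by case.
by rewrite /= big_ord_recl /=.
Qed.

Lemma submod0 A : submodule D A -> A 0. Proof. by case. Qed.
Lemma submodD A x y : submodule D A -> A x -> A y -> A (x + y).
Proof. by case=> _ h _; apply: h. Qed.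
Lemma submodM A r x : submodule D A -> D r -> A x -> A (r * x).
Proof. by case=> _ _ h; apply: h. Qed.
Lemma submodN A x : submodule D A -> A x -> A (- x).
Proof. move=> h hx; rewrite -mulN1r; apply: submodM => //; apply/srN/sr1. Qed.

Lemma span_sub A s : submodule D A -> (forall x, x \in s -> A x) -> sub (spn D s) A.
Proof.
move=> hA; elim: s => [|a s IH] hs x.
  by move/span_nil => ->; apply: submod0.
case/span_cons => r [y [hr hy ->]].
apply: submodD => //; first by apply: submodM => //; apply: hs; rewrite inE eqxx.
by apply: IH => // z hz; apply: hs; rewrite inE hz orbT.
Qed.

Lemma span_mem s x : x \in s -> spn D s x.
Proof.
elim: s => [//|a s IH]; rewrite inE => /orP [/eqP ->|hx]; apply/span_cons.
  exists 1, 0; split; [exact: sr1| |by rewrite mul1r addr0].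
  by elim: (s) => [|b t IHt]; [apply/span_nil|apply/span_cons; exists 0, 0; split => //; [apply: sr0|rewrite mul0r addr0]].
by exists 0, x; split; [apply: sr0|apply: IH|rewrite mul0r add0r].
Qed.

Lemma span_submod s : submodule D (spn D s).
Proof.
elim: s => [|a s IH].
  split; first by apply/span_nil.
    by move=> x y /span_nil -> /span_nil ->; apply/span_nil; rewrite addr0.
  by move=> r x _ /span_nil ->; apply/span_nil; rewrite mulr0.
split.
- apply/span_cons; exists 0, 0; split; [exact: sr0|exact: submod0|by rewrite mul0r addr0].
- move=> x y /span_cons [r1 [y1 [h1 h1' ->]]] /span_cons [r2 [y2 [h2 h2' ->]]].
  apply/span_cons; exists (r1 + r2), (y1 + y2); split; [exact: srD|exact: submodD|].
  by rewrite mulrDl; rewrite -!addrA; congr (_ + _); rewrite addrCA.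
- move=> r x hr /span_cons [r1 [y1 [h1 h1' ->]]].
  apply/span_cons; exists (r * r1), (r * y1); split; [exact: srM|exact: submodM|].
  by rewrite mulrDr mulrA.
Qed.

Lemma span_cat_l s t : sub (spn D s) (spn D (s ++ t)).
Proof. apply: span_sub; first exact: span_submod. by move=> x hx; apply: span_mem; rewrite mem_cat hx. Qed.
Lemma span_cat_r s t : sub (spn D t) (spn D (s ++ t)).
Proof. apply: span_sub; first exact: span_submod. by move=> x hx; apply: span_mem; rewrite mem_cat hx orbT. Qed.

Lemma colon_span A s w : submodule D A ->
  colon A (spn D s) w <-> (forall x, x \in s -> A (w * x)).
Proof.
move=> hA; split; first by move=> h x hx; apply: h; apply: span_mem.
move=> h b hb.
have hS : submodule D (fun y => A (w * y)).
  split; first by rewrite mulr0; apply: submod0.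
    by move=> x y hx hy; rewrite mulrDr; apply: submodD.
  by move=> r x hr hx; rewrite mulrCA; apply: submodM.
exact: (span_sub hS h hb).
Qed.

Lemma colon_anti (A B C : K -> Prop) : sub A B -> sub (colon C B) (colon C A).
Proof. by move=> hAB x hx b hb; apply: hx; apply: hAB. Qed.

Lemma v_ext A : sub A (vclos D A).
Proof. by move=> x hx b hb; rewrite mulrC; apply: hb. Qed.

Lemma v_mono A B : sub A B -> sub (vclos D A) (vclos D B).
Proof. by move=> h; apply: colon_anti; apply: colon_anti. Qed.

Lemma v_idem A : sub (vclos D (vclos D A)) (vclos D A).
Proof. apply: colon_anti; apply: v_ext. Qed.

Lemma v_subD J : sub J D -> sub (vclos D J) D.
Proof.
move=> hJ x hx; rewrite -[x]mulr1; apply: hx => j hj; rewrite mul1r; exact: hJ.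
Qed.

Lemma colon_submod A : submodule D (colon D A).
Proof.
split.
- by move=> b _; rewrite mul0r; apply: sr0.
- by move=> x y hx hy b hb; rewrite mulrDl; apply: srD; [apply: hx|apply: hy].
- by move=> r x hr hx b hb; rewrite -mulrA; apply: srM => //; apply: hx.
Qed.

Lemma v_submod A : submodule D (vclos D A).
Proof. exact: colon_submod. Qed.

Lemma ideal_one I : ideal D I -> I 1 -> sub D I.
Proof. by case=> hI _ h1 x hx; rewrite -[x]mulr1; apply: submodM. Qed.

Lemma proper_not1 I : ideal D I -> prp D I -> ~ I 1.
Proof. by move=> hI [x [hx hnx]] h1; apply: hnx; apply: ideal_one. Qed.

Lemma not1_proper I : ~ I 1 -> prp D I.
Proof. by move=> h; exists 1; split => //; exact: sr1. Qed.

Lemma fg_span J : fin_gen D J -> exists s, seteq J (spn D s).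
Proof. by []. Qed.

Lemma tclos_span I x : tclos D I x <->
  exists s, [/\ nonzero (spn D s), sub (spn D s) I & vclos D (spn D s) x].
Proof.
split.
  case=> J [[s hs] [y [hy hy0]] hJI hx]; exists s; split.
  - by exists y; split => //; apply/hs.
  - by move=> z /hs; apply: hJI.
  - by move: hx; apply: v_mono => z /hs.
case=> s [hnz hsub hx]; exists (spn D s); split => //; by exists s.
Qed.

Lemma nonzero_span1 x : x != 0 -> nonzero (spn D [:: x]).
Proof. by move=> hx; exists x; split => //; apply: span_mem; rewrite inE. Qed.

Lemma t_ext I : ideal D I -> nonzero I -> sub I (tclos D I).
Proof.
move=> hI [x0 [hx0 hx00]] x hx; apply/tclos_span; exists [:: x0; x]; split.
- by exists x0; split => //; apply: span_mem; rewrite inE eqxx.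
- by apply: span_sub; [case: hI|move=> z; rewrite !inE => /orP[] /eqP ->].
- by apply: v_ext; apply: span_mem; rewrite !inE eqxx orbT.
Qed.

Lemma t_closed M s : t_ideal D M -> nonzero (spn D s) -> sub (spn D s) M ->
  sub (vclos D (spn D s)) M.
Proof.
case=> _ _ hM hnz hs x hx; apply/hM; apply/tclos_span; exists s; split => //.
Qed.

Lemma tclos_subD I : ideal D I -> sub (tclos D I) D.
Proof.
case=> _ hID x /tclos_span [s [_ hs hx]].
by apply: (v_subD (J := spn D s)) => // z /hs /hID.
Qed.

Lemma t_mono I J : sub I J -> sub (tclos D I) (tclos D J).
Proof.
move=> h x /tclos_span [s [h1 h2 h3]]; apply/tclos_span; exists s; split => //.
by move=> z /h2 /h.
Qed.

Lemma tclos_submod I : ideal D I -> nonzero I -> submodule D (tclos D I).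
Proof.
move=> hI hnz; split.
- by apply: t_ext => //; apply: submod0; case: hI.
- move=> x y /tclos_span [s [h1 h2 h3]] /tclos_span [t [h1' h2' h3']].
  apply/tclos_span; exists (s ++ t); split.
  + by case: h1 => z [hz hz0]; exists z; split => //; apply: span_cat_l.
  + by apply: span_sub; [case: hI|move=> z; rewrite mem_cat => /orP[] hz;
      [apply: h2|apply: h2']; apply: span_mem].
  + apply: (submodD (A := vclos D (spn D (s ++ t)))); first exact: v_submod.
      by move: h3; apply: v_mono; apply: span_cat_l.
    by move: h3'; apply: v_mono; apply: span_cat_r.
- move=> r x hr /tclos_span [s [h1 h2 h3]]; apply/tclos_span; exists s; split => //.
  by apply: (submodM (A := vclos D (spn D s))) => //; apply: v_submod.
Qed.

Lemma t_idem I : ideal D I -> nonzero I -> sub (tclos D (tclos D I)) (tclos D I).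
Proof.
move=> hI hnz x /tclos_span [s [h1 h2 h3]].
have [t [ht1 ht2 ht3]] : exists t, [/\ nonzero (spn D t), sub (spn D t) I &
    forall y, y \in s -> vclos D (spn D t) y].
  have hs : forall y, y \in s -> tclos D I y by move=> y hy; apply: h2; apply: span_mem.
  elim: (s) hs => [|a u IH] hs.
    case: hnz => x0 [hx0 hx00]; exists [:: x0]; split => //.
    - exact: nonzero_span1.
    - by apply: span_sub; [case: hI|move=> z; rewrite inE => /eqP ->].
  have [|t [ht1 ht2 ht3]] := IH; first by move=> y hy; apply: hs; rewrite inE hy orbT.
  have /tclos_span [v [hv1 hv2 hv3]] := hs a (mem_head _ _).
  exists (t ++ v); split.
  - by case: ht1 => z [hz hz0]; exists z; split => //; apply: span_cat_l.
  - by apply: span_sub; [case: hI|move=> z; rewrite mem_cat => /orP[] hz;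
      [apply: ht2|apply: hv2]; apply: span_mem].
  - move=> y; rewrite inE => /orP [/eqP ->|hy].
      by move: hv3; apply: v_mono; apply: span_cat_r.
    by move: (ht3 y hy); apply: v_mono; apply: span_cat_l.
apply/tclos_span; exists t; split => //.
apply: v_idem; move: h3; apply: v_mono; apply: span_sub; first exact: v_submod.
exact: ht3.
Qed.

Lemma t_ideal_tclos I : ideal D I -> nonzero I -> t_ideal D (tclos D I).
Proof.
move=> hI hnz; split.
- by split; [apply: tclos_submod|apply: tclos_subD].
- have hext := t_ext hI hnz.
  by case: hnz => x [hx hx0]; exists x; split => //; apply: hext.
- move=> x; split; last by apply: t_idem.
  apply: t_ext; first by split; [apply: tclos_submod|apply: tclos_subD].
  have hext := t_ext hI hnz.
  by case: hnz => y [hy hy0]; exists y; split => //; apply: hext.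
Qed.

End Gen.

Lemma span_nz (K : fieldType) (D : K -> Prop) (s : seq K) : is_subring D ->
  nonzero (spn D s) -> exists x, x \in s /\ x != 0.
Proof.
move=> hD [y [hy hy0]]; apply: NNPP => hn.
have h0 : submodule D (fun x : K => x = 0).
  by split => // [x y' -> ->|r x _ ->]; rewrite ?addr0 ?mulr0.
have hs : forall x, x \in s -> x = 0.
  by move=> x hx; apply: NNPP => hx0; apply: hn; exists x; split => //; apply/eqP.
by have := span_sub hD h0 hs hy => e; move: hy0; rewrite e eqxx.
Qed.


Section RR.
Variable K : fieldType.
Variable R : K -> Prop.
Hypothesis HR : is_subring R.
Hypothesis HK : is_quotient_field R.
Hypothesis HKR : exists x, ~ R x.
Hypothesis HP : PvMD R.

Notation loc := (localization R).

Lemma submod_self : submodule R R.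
Proof.
split; [exact: sr0 HR|by move=> x y; apply: srD|by move=> r x; apply: srM].
Qed.

Lemma ideal0 I : ideal R I -> I 0. Proof. by case=> h _; apply: submod0 h. Qed.
Lemma idealD I x y : ideal R I -> I x -> I y -> I (x + y).
Proof. by case=> h _; exact: (submodD h). Qed.
Lemma idealM I r x : ideal R I -> R r -> I x -> I (r * x).
Proof. by case=> h _; exact: (submodM h). Qed.
Lemma idealMr I r x : ideal R I -> R r -> I x -> I (x * r).
Proof. by move=> hI hr hx; rewrite mulrC; apply: idealM. Qed.
Lemma idealR I x : ideal R I -> I x -> R x.
Proof. by case=> _ h; apply: h. Qed.

Lemma nP0 P s : ideal R P -> ~ P s -> s != 0.
Proof. by move=> hP hs; apply/eqP => e; apply: hs; rewrite e; apply: ideal0. Qed.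

Lemma prime_mul P a b : prime_ideal R P -> R a -> R b -> ~ P a -> ~ P b -> ~ P (a * b).
Proof. by case=> _ _ h ha hb na nb /(h _ _ ha hb) []. Qed.

Lemma prime_not1 P : prime_ideal R P -> ~ P 1.
Proof. by case=> hI hp _; apply: proper_not1 hp. Qed.

Lemma prime_powN P a n : prime_ideal R P -> R a -> ~ P a -> ~ P (a ^+ n).
Proof.
move=> hP ha na; elim: n => [|n IH]; first by rewrite expr0; apply: prime_not1.
by rewrite exprS; apply: prime_mul => //; apply: srX.
Qed.

Lemma prime_pow P a n : prime_ideal R P -> R a -> P (a ^+ n) -> P a.
Proof. by move=> hP ha h; apply: NNPP => na; exact: (@prime_powN P a n hP ha na h). Qed.

Lemma prime_ideal_ideal P : prime_ideal R P -> ideal R P. Proof. by case. Qed.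

Lemma loc_R P x : ~ P 1 -> R x -> loc P x.
Proof. by move=> h1 hx; exists x, 1; split => //; [exact: sr1| rewrite divr1]. Qed.

Lemma loc_mono P M : sub P M -> sub (loc M) (loc P).
Proof. by move=> h x [a [s [ha hs hns ->]]]; exists a, s; split => // /h. Qed.

Lemma loc_mul P x y : prime_ideal R P -> loc P x -> loc P y -> loc P (x * y).
Proof.
move=> hP [a [s [ha hs hns ->]]] [b [t [hb ht hnt ->]]].
exists (a * b), (s * t); split; [exact: srM|exact: srM|exact: prime_mul|].
have := nP0 (prime_ideal_ideal hP) hns; have := nP0 (prime_ideal_ideal hP) hnt.
move=> h1 h2; field; by rewrite h1 h2.
Qed.

Lemma loc_inv P a : prime_ideal R P -> R a -> ~ P a -> loc P a^-1.
Proof. by move=> hP ha na; exists 1, a; split => //; [exact: sr1|rewrite div1r]. Qed.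

Lemma loc_Rmul P r x : prime_ideal R P -> R r -> loc P x -> loc P (r * x).
Proof. by move=> hP hr hx; apply: loc_mul => //; apply: loc_R => //; apply: prime_not1. Qed.

Lemma chain_fin (F : (K -> Prop) -> Prop) (s : seq K) :
  (forall X Y, F X -> F Y -> (forall x, X x -> Y x) \/ (forall x, Y x -> X x)) ->
  (exists X, F X) ->
  (forall x, x \in s -> exists X, F X /\ X x) ->
  exists C, F C /\ forall x, x \in s -> C x.
Proof.
move=> htot [X0 hX0]; elim: s => [|a s IH] hs; first by exists X0.
have [|C [hC hCs]] := IH; first by move=> x hx; apply: hs; rewrite inE hx orbT.
have [X [hX hXa]] := hs a (mem_head _ _).
case: (htot _ _ hC hX) => h.
  by exists X; split => // x; rewrite inE => /orP [/eqP ->|/hCs /h].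
by exists C; split => // x; rewrite inE => /orP [/eqP -> |/hCs]; [apply: h|].
Qed.

Lemma chain_ideal (F : (K -> Prop) -> Prop) :
  (forall X, F X -> ideal R X) ->
  (forall X Y, F X -> F Y -> (forall x, X x -> Y x) \/ (forall x, Y x -> X x)) ->
  (exists X, F X) -> ideal R (fun x => exists X, F X /\ X x).
Proof.
move=> hid htot [X0 hX0]; split; last by move=> x [X [hX hx]]; apply: idealR (hid _ hX) hx.
split.
- by exists X0; split => //; apply: ideal0; apply: hid.
- move=> x y [X [hX hx]] [Y [hY hy]].
  case: (htot _ _ hX hY) => h.
    by exists Y; split => //; apply: idealD (hid _ hY) (h _ hx) hy.
  by exists X; split => //; apply: idealD (hid _ hX) hx (h _ hy).
- by move=> r x hr [X [hX hx]]; exists X; split => //; apply: idealM (hid _ hX) hr hx.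
Qed.

Lemma exists_tmax A : t_ideal R A -> ~ A 1 -> exists M, t_max R M /\ sub A M.
Proof.
move=> hA hA1.
have [|M [[hM hM1] hAM hmax]] := @zorn_fam K (fun X => t_ideal R X /\ ~ X 1) A (conj hA hA1).
  move=> F hF htot hne.
  have hid : ideal R (fun x => exists X, F X /\ X x).
    by apply: chain_ideal => // X /hF [[]].
  split; [split => //| ].
  - case: hne => X hX; case: (hF _ hX) => [[_ [x [hx hx0]] _] _].
    by exists x; split => //; exists X.
  - move=> x; split.
      case=> X [hX hx]; case: (hF _ hX) => [[hXi hXn hXt] _].
      by move: (hXt x) => [/(_ hx) h _]; move: h; apply: t_mono => y hy; exists X.
    move=> /tclos_span [s [hnz hs hx]].
    have [C [hC hCs]] := chain_fin htot hne (fun y hy => hs y (span_mem HR hy)).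
    case: (hF _ hC) => hCt _.
    exists C; split => //; apply: (t_closed hCt hnz _ hx).
    by apply: span_sub => //; case: hCt => [[]].
  - by case=> X [hX hx]; case: (hF _ hX) => _; apply.
exists M; split => //; split => //; first by apply: not1_proper.
move=> J hJ hJp hMJ; apply: hmax => //; split => //.
by apply: proper_not1 hJp; case: hJ.
Qed.

Lemma tmax_not1 M : t_max R M -> ~ M 1.
Proof. by case=> [[hM _ _] hp _]; apply: proper_not1 hp. Qed.

Lemma tmax_ideal M : t_max R M -> ideal R M. Proof. by case=> [[]]. Qed.
Lemma tmax_t M : t_max R M -> t_ideal R M. Proof. by case. Qed.

Lemma span_scale (D : K -> Prop) (s : seq K) (y b : K) : is_subring D -> spn D s y ->
  spn D (map (fun x => x * b) s) (y * b).
Proof.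
move=> hD; elim: s y => [|a s IH] y.
  by move/(span_nil hD) ->; apply/(span_nil hD); rewrite mul0r.
case/span_cons => r [z [hr hz ->]]; apply/span_cons.
by exists r, (z * b); split => //; [apply: IH|rewrite mulrDl mulrA].
Qed.

Lemma tmax_prime M : t_max R M -> prime_ideal R M.
Proof.
move=> hM; have hMi := tmax_ideal hM.
split => //; first by case: hM.
move=> a b ha hb hab; apply: NNPP => /not_or_and [na nb].
pose C := fun r => R r /\ M (r * b).
have hCi : ideal R C.
  split; last by move=> x [].
  split.
  - by split; [exact: sr0 HR|rewrite mul0r; apply: ideal0].
  - by move=> x y [hx hx'] [hy hy']; split; [apply: srD|rewrite mulrDl; apply: idealD].
  - by move=> r x hr [hx hx']; split; [apply: srM|rewrite -mulrA; apply: idealM].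
have hMC : sub M C.
  by move=> m hm; split; [apply: idealR hMi hm|apply: idealMr].
have hCnz : nonzero C.
  by case: hM => [[_ [m [hm hm0]] _] _ _]; exists m; split => //; apply: hMC.
have hCt : t_ideal R C.
  split => // x; split; first by apply: t_ext.
  move=> /tclos_span [s [hnz hs hx]]; split.
    by apply: (v_subD (J := spn R s)) => // z /hs [].
  pose s' := map (fun x => x * b) s.
  apply: (t_closed (tmax_t hM) (s := s')).
  - case: hnz => y [hy hy0]; exists (y * b); split; first exact: span_scale.
    by rewrite mulf_neq0 //; apply: nP0 nb.
  - apply: span_sub => //; first by case: hMi.
    by move=> z /mapP [y hy ->]; case: (hs y (span_mem HR hy)).
  - move=> w hw.
    have : colon R (spn R s) (b * w).
      apply/(colon_span HR _ _ submod_self) => y hy.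
      have -> : b * w * y = w * (y * b) by ring.
      by apply: hw; apply: span_mem => //; apply/mapP; exists y.
    by move/hx; rewrite mulrA.
have [_ _ hmax] := hM.
have hC1 : ~ C 1 by case=> _; rewrite mul1r.
have := hmax C hCt (not1_proper HR hC1) hMC a.
by move=> h; apply: na; apply: h; split.
Qed.

Lemma loc_val P M : t_max R M -> sub P M -> valuation_domain (loc P).
Proof.
move=> hM hPM x hx; case: (@HP M hM x hx) => h; [left|right]; move: h; exact: loc_mono.
Qed.

Lemma exists_tmax_of I : ideal R I -> nonzero I -> ~ tclos R I 1 ->
  exists M, t_max R M /\ sub I M.
Proof.
move=> hI hnz h1; have [M [hM hsub]] := exists_tmax (t_ideal_tclos HR hI hnz) h1.
by exists M; split => // x hx; apply: hsub; apply: t_ext.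
Qed.

Lemma loc_all y : (forall M, t_max R M -> loc M y) -> R y.
Proof.
move=> hy; apply: NNPP => ny.
pose C := colon R (spn R [:: 1; y]).
have hC x : C x <-> R x /\ R (x * y).
  rewrite /C (colon_span HR _ _ submod_self); split.
    by move=> h; split; [rewrite -[x]mulr1|]; apply: h; rewrite !inE eqxx ?orbT.
  by case=> h1 h2 z; rewrite !inE => /orP [] /eqP ->; rewrite ?mulr1.
have hCi : ideal R C by split; [exact: (colon_submod HR)|move=> x /hC []].
have hCt : t_ideal R C.
  split => //.
    have [a [b [ha hb hb0 e]]] := HK y.
    exists b; split => //; apply/hC; split => //.
    by rewrite e mulrC divfK.
  move=> x; split; first by apply: t_ext => //; have [a [b [ha hb hb0 e]]] := HK y;
    exists b; split => //; apply/hC; split => //; rewrite e mulrC divfK.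
  move=> /tclos_span [s [hnz hs hx]] z hz; apply: hx => w hw.
  by rewrite mulrC; apply: (hs w hw).
have hC1 : ~ C 1 by move=> /hC [_]; rewrite mul1r.
have [M [hM hCM]] := exists_tmax hCt hC1.
have [a [s [ha hs hns e]]] := hy M hM.
have hs0 := nP0 (tmax_ideal hM) hns.
apply: hns; apply: hCM; apply/hC; split => //.
by rewrite e mulrC divfK.
Qed.



Lemma prod_single (A B : K -> Prop) a b : A a -> B b -> Defs.prod A B (a * b).
Proof.
move=> ha hb; exists 1%N, (fun _ => a), (fun _ => b); split => //.
by rewrite big_ord1.
Qed.

Lemma prod_add (A B : K -> Prop) x y : Defs.prod A B x -> Defs.prod A B y ->
  Defs.prod A B (x + y).
Proof.
case=> n1 [a1 [b1 [h1 ->]]] [n2 [a2 [b2 [h2 ->]]]].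
exists (n1 + n2)%N, (fun i => if (i < n1)%N then a1 i else a2 (i - n1)%N),
  (fun i => if (i < n1)%N then b1 i else b2 (i - n1)%N); split.
  by move=> i; case: ifP.
rewrite big_split_ord /=; congr (_ + _); apply: eq_bigr => i _ /=.
  by rewrite ltn_ord.
by rewrite ltnNge leq_addr /= addKn.
Qed.

Lemma prod_mul (A B : K -> Prop) r x : (forall a, A a -> A (r * a)) ->
  Defs.prod A B x -> Defs.prod A B (r * x).
Proof.
move=> hA [n [a [b [h ->]]]]; exists n, (fun i => r * a i), b; split.
  by move=> i; case: (h i) => ha hb; split => //; apply: hA.
by rewrite mulr_sumr; apply: eq_bigr => i _; rewrite mulrA.
Qed.

Lemma sum_R n (F : nat -> K) : (forall i, R (F i)) -> R (\sum_(i < n) F i).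
Proof.
move=> h; apply: (big_ind (fun x => R x)); [exact: sr0 HR|move=> x y; exact: srD|by move=> i _].
Qed.

Lemma prod_ideal (A B : K -> Prop) : ideal R A -> nonzero A -> sub B (colon R A) ->
  (exists b, B b) -> ideal R (Defs.prod A B).
Proof.
move=> hA [a0 [ha0 _]] hB [b0 hb0]; split; first split.
- by rewrite -(mul0r b0); apply: prod_single => //; exact: ideal0 hA.
- by move=> x y; apply: prod_add.
- by move=> r x hr; apply: prod_mul => a ha; exact: idealM hA hr ha.
- move=> x [n [a [b [h ->]]]]; apply: (@sum_R n (fun i => a i * b i)) => i.
  by case: (h i) => ha hb; rewrite mulrC; apply: hB.
Qed.

Lemma prod_mono (A B A' B' : K -> Prop) : sub A A' -> sub B B' ->
  sub (Defs.prod A B) (Defs.prod A' B').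
Proof.
move=> hA hB x [n [a [b [h ->]]]]; exists n, a, b; split => //.
by move=> i; case: (h i) => ha hb; split; [apply: hA|apply: hB].
Qed.

Lemma one_colon (A : K -> Prop) : sub A R -> colon R A 1.
Proof. by move=> hA b hb; rewrite mul1r; apply: hA. Qed.

Lemma prod_ext (A : K -> Prop) : sub A R -> sub A (Defs.prod A (colon R A)).
Proof. by move=> hA a ha; rewrite -[a]mulr1; apply: prod_single => //; apply: one_colon. Qed.

Lemma tinv_ideal (P : K -> Prop) : ideal R P -> nonzero P ->
  ideal R (Defs.prod P (colon R P)) /\ nonzero (Defs.prod P (colon R P)).
Proof.
move=> hP hnz; split.
  apply: prod_ideal => //; try by move=> x.
  by exists 1; apply: one_colon; case: hP.
case: hnz => x [hx hx0]; exists x; split => //; apply: prod_ext => //; by case: hP.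
Qed.

Lemma tinv_of1 (P : K -> Prop) : ideal R P -> nonzero P ->
  tclos R (Defs.prod P (colon R P)) 1 -> t_invertible R P.
Proof.
move=> hP hnz h1; have [hI hInz] := tinv_ideal hP hnz.
move=> x; split; first by apply: tclos_subD.
have [[hT _] _ _] := t_ideal_tclos HR hI hInz.
by move=> hx; exact: (ideal_one (D := R) (conj hT (tclos_subD hI)) h1 hx).
Qed.


Ltac fld := field; rewrite ?oner_neq0 ?andbT ?mulf_neq0 //; try (repeat (apply/andP; split)); rewrite ?mulf_neq0 ?oner_neq0 //.

Lemma loc0 P : ~ P 1 -> loc P 0.
Proof. by move=> h; apply: loc_R => //; exact: sr0 HR. Qed.

Lemma val_min M (s : seq K) : t_max R M -> (exists x, x \in s /\ x != 0) ->
  exists f, [/\ f \in s, f != 0 & forall x, x \in s -> loc M (x / f)].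
Proof.
move=> hM; have hMp := tmax_prime hM; have hM1 := tmax_not1 hM.
elim: s => [|a s IH]; first by case=> x [].
move=> hex; case: (classic (exists x, x \in s /\ x != 0)) => hs.
  have [f [hf hf0 hfx]] := IH hs.
  case: (eqVneq a 0) => ha0.
    exists f; split => //; first by rewrite inE hf orbT.
    move=> x; rewrite inE => /orP [/eqP ->|/hfx //].
    by rewrite ha0 mul0r; apply: loc0.
  have haf : a / f != 0 by rewrite mulf_neq0 ?invr_eq0.
  case: (@HP M hM _ haf) => h.
    exists f; split => //; first by rewrite inE hf orbT.
    by move=> x; rewrite inE => /orP [/eqP ->|/hfx].
  exists a; split => //; first by rewrite inE eqxx.
  move=> x; rewrite inE => /orP [/eqP ->|hx]; first by rewrite divff //; apply: loc_R => //; exact: sr1 HR.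
  have -> : x / a = (x / f) * (a / f)^-1 by fld.
  by apply: loc_mul => //; apply: hfx.
have ha0 : a != 0.
  case: hex => x [hx hx0]; move: hx; rewrite inE => /orP [/eqP <- //|hx].
  by exfalso; apply: hs; exists x.
exists a; split => //; first by rewrite inE eqxx.
move=> x; rewrite inE => /orP [/eqP ->|hx]; first by rewrite divff //; apply: loc_R => //; exact: sr1 HR.
have -> : x = 0 by apply: NNPP => hx0; apply: hs; exists x; split => //; apply/eqP.
by rewrite mul0r; apply: loc0.
Qed.

Lemma loc_common M (s : seq K) f : t_max R M -> f != 0 ->
  (forall x, x \in s -> loc M (x / f)) ->
  exists t, [/\ R t, ~ M t & forall x, x \in s -> R (t * x / f)].
Proof.
move=> hM hf0; have hMp := tmax_prime hM.
elim: s => [|a s IH] hs.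
  by exists 1; split => //; [exact: sr1 HR|exact: tmax_not1].
have [|t1 [ht1 hnt1 h1]] := IH; first by move=> x hx; apply: hs; rewrite inE hx orbT.
have [c [u [hc hu hnu e]]] := hs a (mem_head _ _).
have hu0 := nP0 (tmax_ideal hM) hnu.
exists (t1 * u); split; [exact: srM|exact: prime_mul|].
move=> x; rewrite inE => /orP [/eqP ->|hx].
  have -> : t1 * u * a / f = t1 * (u * (a / f)) by fld.
  rewrite e; have -> : u * (c / u) = c by fld.
  exact: srM.
have -> : t1 * u * x / f = u * (t1 * x / f) by fld.
by apply: srM => //; apply: h1.
Qed.

Lemma span_ideal (s : seq K) : (forall x, x \in s -> R x) -> ideal R (spn R s).
Proof. by move=> hs; split; [exact: (span_submod HR)|apply: span_sub => //; exact: submod_self]. Qed.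

Lemma fg_tinv (s : seq K) : (forall x, x \in s -> R x) -> nonzero (spn R s) ->
  tclos R (Defs.prod (spn R s) (colon R (spn R s))) 1.
Proof.
move=> hs hnz; apply: NNPP => h1.
have hG := span_ideal hs.
have [hI hInz] := tinv_ideal hG hnz.
have [M [hM hsub]] := exists_tmax_of hI hInz h1.
have [f [hf hf0 hfx]] := val_min hM (span_nz HR hnz).
have [t [ht hnt htx]] := loc_common hM hf0 hfx.
apply: hnt; apply: hsub.
have -> : t = f * (t / f) by fld.
apply: prod_single; first exact: span_mem.
apply/(colon_span HR _ _ submod_self) => x hx.
by rewrite mulrAC; apply: htx.
Qed.

Lemma tprime_prime P : t_prime R P -> prime_ideal R P. Proof. by case. Qed.
Lemma tprime_t P : t_prime R P -> t_ideal R P. Proof. by case. Qed.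
Lemma tprime_ideal P : t_prime R P -> ideal R P. Proof. by case=> [[]]. Qed.
Lemma tprime_nz P : t_prime R P -> nonzero P. Proof. by case=> _ []. Qed.
Lemma tprime_not1 P : t_prime R P -> ~ P 1. Proof. by case=> /prime_not1. Qed.

Lemma tprime_tmax P : t_prime R P -> exists M, t_max R M /\ sub P M.
Proof. by move=> h; apply: exists_tmax; [apply: tprime_t|apply: tprime_not1]. Qed.

Lemma tprime_val P : t_prime R P -> valuation_domain (loc P).
Proof. by move=> h; have [M [hM hPM]] := tprime_tmax h; apply: loc_val hM hPM. Qed.

Lemma notinv_not1 P : t_prime R P -> ~ t_invertible R P ->
  ~ tclos R (Defs.prod P (colon R P)) 1.
Proof. by move=> h hn h1; apply: hn; apply: tinv_of1 => //; [apply: tprime_ideal|apply: tprime_nz]. Qed.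

Lemma inv_in_loc P x : t_prime R P -> ~ loc P x ->
  exists q s, [/\ R q, R s, P q, ~ P s & x * q = s] /\ x != 0.
Proof.
move=> hP hx.
have hx0 : x != 0 by apply/eqP => e; apply: hx; rewrite e; apply: loc0; apply: tprime_not1.
case: (tprime_val hP hx0) => // -[q [s [hq hs hns e]]].
have hs0 := nP0 (tprime_ideal hP) hns.
have hxq : x * q = s.
  have -> : q = x^-1 * s by rewrite e; fld.
  by fld.
exists q, s; split => //; split => //.
apply: NNPP => nq; apply: hx; exists s, q; split => //.
have hq0 := nP0 (tprime_ideal hP) nq.
by rewrite -hxq; fld.
Qed.

Lemma prime_cancel P a b : prime_ideal R P -> R a -> R b -> P (a * b) -> ~ P b -> P a.
Proof. by case=> _ _ h ha hb /(h _ _ ha hb) [] . Qed.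

Lemma stepA P x p : t_prime R P -> ~ t_invertible R P -> colon R P x -> P p -> P (x * p).
Proof.
move=> hP hni hx hp; apply: NNPP => na.
have hPp := tprime_prime hP; have hPi := tprime_ideal hP.
have ha : R (x * p) by apply: hx.
have [hI hInz] := tinv_ideal hPi (tprime_nz hP).
have [M [hM hsub]] := exists_tmax_of hI hInz (notinv_not1 hP hni).
have haM : M (x * p) by apply: hsub; rewrite mulrC; apply: prod_single.
have hPM : sub P M by move=> y hy; apply: hsub; apply: prod_ext => //; case: hPi.
have hMi := tmax_ideal hM.
have hxl : loc P x.
  apply: NNPP => hxn.
  have [q [s [[hq hs hPq hns hxq] hx0]]] := inv_in_loc hP hxn.
  have ha0 := nP0 hPi na.
  have hp0 : p != 0 by apply/eqP => e; apply: na; rewrite e mulr0; apply: ideal0.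
  have hs0 := nP0 hPi hns.
  have hu : x^-1 / (x * p) != 0 by rewrite mulf_neq0 ?invr_eq0 ?mulf_neq0.
  case: (@HP M hM _ hu) => -[c [t [hc ht hnt eu]]]; have ht0 := nP0 hMi hnt.
    have hcx : c = t * (x^-1 / (x * p)) by rewrite eu; fld.
    have hqs : q = s / x by rewrite -hxq; fld.
    have e1 : q * t = c * s * (x * p) by rewrite hcx hqs; fld.
    have hPc : P c.
      have h3 : P (c * s * (x * p)) by rewrite -e1; exact: idealMr hPi ht hPq.
      have h4 := prime_cancel hPp (srM HR hc hs) ha h3 na.
      exact: prime_cancel hPp hc hs h4 hns.
    apply: hnt; have -> : t = x * c * (x * p) by rewrite hcx; fld.
    exact: (idealM hMi (hx c hPc) haM).
  have hcc : c = t * (x * (x * p)).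
    have -> : c = c / t * t by fld.
    by rewrite -eu; fld.
  have e2 : c * q = x * p * s * t by rewrite hcc -hxq; fld.
  have hPt : ~ P t by move/hPM.
  have : P (c * q) by exact: idealM hPi hc hPq.
  rewrite e2; apply: (prime_mul hPp (srM HR ha hs) ht _ hPt).
  exact: (prime_mul hPp ha hs na hns).
have [b [s [hb hs hns e]]] := hxl.
have hs0 := nP0 hPi hns.
have e3 : x * p * s = p * b by rewrite e; fld.
have : P (x * p * s) by rewrite e3; exact: idealMr hPi hb hp.
by move/(prime_cancel hPp ha hs) => /(_ hns).
Qed.

Lemma E_in_loc P x : t_prime R P -> Eend P x -> loc P x.
Proof.
move=> hP hx; apply: NNPP => hn.
have [q [s [[hq hs hPq hns hxq] hx0]]] := inv_in_loc hP hn.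
by apply: hns; rewrite -hxq; apply: hx.
Qed.



Lemma colon_T (A : K -> Prop) x M : sub A R -> ideal R M -> colon R A x -> ~ sub A M -> loc M x.
Proof.
move=> hAR hM hx hn.
have [p hp] : exists p, ~ (A p -> M p) by apply: not_all_ex_not.
have hAp : A p by apply: NNPP => h; apply: hp => /h.
have hMp : ~ M p by move=> h; apply: hp.
have hp0 := nP0 hM hMp.
by exists (x * p), p; split => //; [exact: hx|exact: hAR|fld].
Qed.

Lemma locP_M P M x p : prime_ideal R P -> t_max R M -> sub P M -> loc P x -> P p ->
  loc M (x * p).
Proof.
move=> hP hM hPM [b [s [hb hs hns ->]]] hp.
have hPi := prime_ideal_ideal hP; have hs0 := nP0 hPi hns.
have hMp := tmax_prime hM.
case: (eqVneq p 0) => [->|hp0]; first by rewrite mulr0; apply: loc0; apply: tmax_not1.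
have hps : p / s != 0 by rewrite mulf_neq0 ?invr_eq0.
case: (@HP M hM _ hps) => h.
  have -> : b / s * p = b * (p / s) by fld.
  by apply: loc_Rmul.
case: h => c [t [hc ht hnt e]]; have ht0 := nP0 (tmax_ideal hM) hnt.
have e2 : s * t = c * p.
  have -> : s = (p / s)^-1 * p by fld.
  by rewrite e; fld.
have : P (s * t) by rewrite e2; exact: idealM hPi hc hp.
by move/(prime_cancel hP hs ht) => /(_ (fun h => hnt (hPM _ h))).
Qed.

Lemma part2 P : t_prime R P -> ~ t_invertible R P ->
  seteq (Eend P) (colon R P) /\ seteq (colon R P) (cap (loc P) (T_off R P)).
Proof.
move=> hP hni; have hPi := tprime_ideal hP.
have hEc : forall x, Eend P x -> colon R P x by move=> x hx b hb; apply: idealR hPi (hx b hb).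
have hcE : forall x, colon R P x -> Eend P x by move=> x hx b hb; apply: stepA.
split; first by move=> x; split; [apply: hEc|apply: hcE].
move=> x; split.
  move=> hx; split; first by apply: E_in_loc => //; apply: hcE.
  move=> M hM hn; apply: colon_T hx hn; [by case: hPi|exact: tmax_ideal].
case=> hl hT b hb; apply: loc_all => M hM.
case: (classic (sub P M)) => hPM.
  exact: locP_M (tprime_prime hP) hM hPM hl hb.
rewrite mulrC; apply: loc_Rmul; [exact: tmax_prime|exact: idealR hPi hb|exact: hT].
Qed.

Lemma strong_E I : strong R I -> seteq (Eend I) (colon R I).
Proof.
case=> hI [A [hA hAnz hIA]] x; split.
  by move=> hx b hb; exact: (idealR hI (hx b hb)).
move=> hx y hy; apply/hIA.
have := hy; move/hIA => [n [a [b [hab ey]]]].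
have hb' : forall i, colon R A (x * b i).
  move=> i a' ha'; case: (hab i) => hai hbi.
  have -> : x * b i * a' = x * (a' * b i) by ring.
  by apply: hx; apply/hIA; apply: prod_single.
exists n, a, (fun i => x * b i); split.
  by move=> i; split; [case: (hab i)|apply: hb'].
by rewrite ey mulr_sumr; apply: eq_bigr => i _; ring.
Qed.

Lemma ideal_addp Q c : ideal R Q -> R c ->
  ideal R (fun y => exists z r, [/\ Q z, R r & y = z + r * c]).
Proof.
move=> hQ hc; split; first split.
- by exists 0, 0; split; [exact: ideal0 hQ|exact: sr0 HR|rewrite mul0r addr0].
- move=> x y [z1 [r1 [h1 h1' ->]]] [z2 [r2 [h2 h2' ->]]].
  exists (z1 + z2), (r1 + r2); split; [exact: idealD|exact: srD|ring].
- move=> r x hr [z1 [r1 [h1 h1' ->]]].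
  exists (r * z1), (r * r1); split; [exact: idealM|exact: srM|ring].
- move=> x [z [r [hz hr ->]]]; apply: (srD HR); [exact: idealR hQ hz|exact: srM].
Qed.

Lemma minchar I P q : ideal R I -> min_prime R I P -> P q ->
  exists s n, [/\ R s, ~ P s & I (s * q ^+ n)].
Proof.
move=> hI [hPp hIP hmin] hq.
have hPi := prime_ideal_ideal hPp; have hRq := idealR hPi hq.
apply: NNPP => hn.
have hdis : forall s n, R s -> ~ P s -> ~ I (s * q ^+ n).
  by move=> s n hs hns hsn; apply: hn; exists s, n.
pose fam := fun X => ideal R X /\ forall s n, R s -> ~ P s -> ~ X (s * q ^+ n).
have [|Q [[hQ hQd] hIQ hQmax]] := @zorn_fam K fam I (conj hI hdis).
  move=> F hF htot hne; split; first by apply: chain_ideal => // X /hF [].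
  by move=> s n hs hns [X [hX hXs]]; case: (hF _ hX) => _ /(_ s n hs hns).
have hQ1 : ~ Q 1.
  by move=> h; apply: (hQd 1 0%N (sr1 HR) (prime_not1 hPp)); rewrite expr0 mulr1.
have hQP : sub Q P.
  move=> r hr; apply: NNPP => hnr.
  by apply: (hQd r 0%N (idealR hQ hr) hnr); rewrite expr0 mulr1.
have hext : forall c, R c -> ~ Q c -> exists s n, [/\ R s, ~ P s &
    exists z r, [/\ Q z, R r & s * q ^+ n = z + r * c]].
  move=> c hc hnc; apply: NNPP => hne.
  have hfam : fam (fun y => exists z r, [/\ Q z, R r & y = z + r * c]).
    split; first exact: ideal_addp.
    by move=> s n hs hns hsn; apply: hne; exists s, n.
  apply: hnc; apply: (hQmax _ hfam).
    by move=> z hz; exists z, 0; split => //; [exact: sr0 HR|rewrite mul0r addr0].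
  by exists 0, 1; split; [exact: ideal0 hQ|exact: sr1 HR|rewrite mul1r add0r].
have hQprime : prime_ideal R Q.
  split => //; first exact: (not1_proper HR hQ1).
  move=> a b ha hb hab; apply: NNPP => /not_or_and [na nb].
  have [s1 [n1 [hs1 hns1 [z1 [r1 [hz1 hr1 e1]]]]]] := hext a ha na.
  have [s2 [n2 [hs2 hns2 [z2 [r2 [hz2 hr2 e2]]]]]] := hext b hb nb.
  apply: (hQd (s1 * s2) (n1 + n2)%N (srM HR hs1 hs2) (prime_mul hPp hs1 hs2 hns1 hns2)).
  have -> : s1 * s2 * q ^+ (n1 + n2) = (s1 * q ^+ n1) * (s2 * q ^+ n2) by rewrite exprD; ring.
  rewrite e1 e2.
  have -> : (z1 + r1 * a) * (z2 + r2 * b) = z1 * (z2 + r2 * b) + (r1 * a) * z2 + (r1 * r2) * (a * b) by ring.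
  have hRz2 := idealR hQ hz2.
  apply: (idealD hQ _ (idealM hQ (srM HR hr1 hr2) hab)).
  exact: (idealD hQ (idealMr hQ (srD HR hRz2 (srM HR hr2 hb)) hz1) (idealM hQ (srM HR hr1 ha) hz2)).
have hPQ := hmin Q hQprime hIQ hQP.
by apply: (hQd 1 1%N (sr1 HR) (prime_not1 hPp)); rewrite expr1 mul1r; apply: hPQ.
Qed.

Definition Uni (A : K -> Prop) := forall w, (forall x, A x -> R (w * x)) -> R w.

Lemma Uni_mono (A B : K -> Prop) : (forall x, A x -> B x) -> Uni A -> Uni B.
Proof. by move=> hAB hA w hw; apply: hA => x /hAB; apply: hw. Qed.

Lemma Uni_rep (A : K -> Prop) a N : R a -> Uni (fun y => A y \/ y = a) ->
  Uni (fun y => A y \/ y = a ^+ N).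
Proof.
move=> ha hU; elim: N => [|N IH] w hw.
  by rewrite -[w]mulr1; apply: hw; right; rewrite expr0.
apply: hU => z [hz|->]; first by apply: hw; left.
apply: IH => z2 [hz2|->].
  by rewrite mulrAC; apply: srM => //; apply: hw; left.
by rewrite -mulrA -exprS; apply: hw; right.
Qed.

Lemma Uni_list N (s : seq K) : forall (A : K -> Prop), (forall x, x \in s -> R x) ->
  Uni (fun y => A y \/ y \in s) ->
  Uni (fun y => A y \/ exists x, x \in s /\ y = x ^+ N).
Proof.
elim: s => [|a s IH] A hs hU.
  by apply: Uni_mono hU => y [h|//]; left.
have h1 : Uni (fun y => (A y \/ y \in s) \/ y = a).
  apply: Uni_mono hU => y [h|]; first by left; left.
  by rewrite inE => /orP [/eqP ->|h]; [right|left; right].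
have h2 := @Uni_rep _ a N (hs a (mem_head _ _)) h1.
have h3 : Uni (fun y => (A y \/ y = a ^+ N) \/ y \in s).
  by apply: Uni_mono h2 => y [[h|h]|h]; [left; left|right|left; right].
have hs' : forall x, x \in s -> R x by move=> x hx; apply: hs; rewrite inE hx orbT.
have h4 := IH (fun y => A y \/ y = a ^+ N) hs' h3.
apply: Uni_mono h4 => y [[h|->]|[x [hx ->]]]; [by left|by right; exists a; split => //; rewrite inE eqxx|].
by right; exists x; split => //; rewrite inE hx orbT.
Qed.

Lemma Eend_pow (I : K -> Prop) (x y : K) n : Eend I x -> I y -> I (x ^+ n * y).
Proof.
move=> hx hy; elim: n => [|n IH]; first by rewrite expr0 mul1r.
by rewrite exprS -mulrA; apply: hx.
Qed.

Lemma combine (I P : K -> Prop) (s : seq K) : ideal R I -> min_prime R I P -> (forall x, x \in s -> P x) ->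
  exists sg N, [/\ R sg, ~ P sg & forall x, x \in s -> I (sg * x ^+ N)].
Proof.
move=> hI hmin; have [hPp _ _] := hmin; have hPi := prime_ideal_ideal hPp.
elim: s => [|a s IH] hs.
  by exists 1, 0%N; split => //; [exact: sr1 HR|exact: prime_not1].
have [|s1 [N1 [hs1 hns1 h1]]] := IH; first by move=> x hx; apply: hs; rewrite inE hx orbT.
have [s2 [n2 [hs2 hns2 h2]]] := minchar hI hmin (hs a (mem_head _ _)).
exists (s1 * s2), (N1 + n2)%N; split; [exact: srM|exact: prime_mul|].
move=> x; rewrite inE => /orP [/eqP ->|hx].
  have -> : s1 * s2 * a ^+ (N1 + n2) = (s1 * a ^+ N1) * (s2 * a ^+ n2) by rewrite exprD; ring.
  have hRa : R a := idealR hPi (hs a (mem_head _ _)).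
  exact: (idealM hI (srM HR hs1 (srX HR N1 hRa)) h2).
have hRx : R x.
  have hx' : x \in a :: s by rewrite inE hx orbT.
  exact: (idealR hPi (hs x hx')).
have -> : s1 * s2 * x ^+ (N1 + n2) = (s2 * x ^+ n2) * (s1 * x ^+ N1) by rewrite exprD; ring.
exact: (idealM hI (srM HR hs2 (srX HR n2 hRx)) (h1 x hx)).
Qed.

Lemma min_in_tmax (I P : K -> Prop) : t_ideal R I -> min_prime R I P -> exists M, t_max R M /\ sub P M.
Proof.
move=> hIt hmin; have [hI hInz _] := hIt; have [hPp hIP _] := hmin.
have hPi := prime_ideal_ideal hPp.
have hPnz : nonzero P by case: hInz => y [hy hy0]; exists y; split => //; apply: hIP.
case: (classic (tclos R P 1)) => h1; last by apply: exists_tmax_of.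
exfalso; have /tclos_span [s [hnz hsP hv]] := h1.
have hsP' : forall x, x \in s -> P x by move=> x hx; apply: hsP; apply: span_mem.
have hsR : forall x, x \in s -> R x by move=> x /hsP'; apply: idealR hPi.
have hU : Uni (fun y => False \/ y \in s).
  move=> w hw; rewrite -[w]mul1r; apply: hv.
  by apply/(colon_span HR _ _ submod_self) => x hx; apply: hw; right.
have [sg [N [hsg hnsg hI']]] := combine hI hmin hsP'.
have hU' := @Uni_list N s _ hsR hU.
have [x0 [hx0 hx00]] := span_nz HR hnz.
have hHI : sub (spn R (map (fun x => sg * x ^+ N) s)) I.
  by apply: span_sub => //; [case: hI|move=> y /mapP [x hx ->]; apply: hI'].
have hHnz : nonzero (spn R (map (fun x => sg * x ^+ N) s)).
  exists (sg * x0 ^+ N); split; first by apply: (span_mem HR); apply/mapP; exists x0.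
  by rewrite mulf_neq0 ?expf_neq0 //; apply: nP0 hPi hnsg.
apply: hnsg; apply: hIP; apply: (t_closed hIt hHnz hHI) => b hb.
rewrite mulrC; apply: hU' => y [//|[x [hx ->]]].
rewrite -mulrA; apply: hb; apply: (span_mem HR); apply/mapP; exists x => //.
Qed.

Lemma loc_add P x y : prime_ideal R P -> loc P x -> loc P y -> loc P (x + y).
Proof.
move=> hP [a [s [ha hs hns ->]]] [b [t [hb ht hnt ->]]].
have hPi := prime_ideal_ideal hP.
have hs0 := nP0 hPi hns; have ht0 := nP0 hPi hnt.
exists (a * t + b * s), (s * t); split; [apply: (srD HR); exact: srM|exact: srM|exact: prime_mul|fld].
Qed.

Lemma loc_pow P x n : prime_ideal R P -> loc P x -> loc P (x ^+ n).
Proof.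
move=> hP hx; elim: n => [|n IH]; first by rewrite expr0; apply: loc_R; [exact: prime_not1|exact: sr1 HR].
by rewrite exprS; apply: loc_mul.
Qed.

Lemma rad_min M I : t_max R M -> ideal R I -> sub I M ->
  exists Q, min_prime R I Q /\ (forall s i, R s -> ~ Q s -> I i -> loc M (i / s)).
Proof.
move=> hM hI hIM.
have hMp := tmax_prime hM; have hMi := tmax_ideal hM.
pose ILM := fun y => exists i t, [/\ I i, R t, ~ M t & y = i / t].
have hILMl : forall u y, loc M u -> ILM y -> ILM (u * y).
  move=> u y [c [t' [hc ht' hnt' ->]]] [i [t [hi ht hnt ->]]].
  have ht0 := nP0 hMi hnt; have ht0' := nP0 hMi hnt'.
  exists (c * i), (t' * t); split; [exact: idealM|exact: srM|exact: prime_mul|fld].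
have hILMR : forall r y, R r -> ILM y -> ILM (r * y).
  by move=> r y hr; apply: hILMl; apply: loc_R => //; exact: tmax_not1.
have hILM : forall i, I i -> ILM i.
  by move=> i hi; exists i, 1; split => //; [exact: sr1 HR|exact: tmax_not1|rewrite divr1].
pose Q := fun r => R r /\ exists n, ILM (r ^+ n).
have hQ0 : Q 0 by split; [exact: sr0 HR|exists 1%N; rewrite expr1; apply: hILM; exact: ideal0 hI].
have hQ1 : ~ Q 1.
  case=> _ [n [i [t [hi ht hnt e]]]].
  have ht0 := nP0 hMi hnt.
  have hti : t = i.
    have := congr1 (fun z => z * t) e; rewrite /= expr1n mul1r => ->; fld.
  by apply: hnt; rewrite hti; apply: hIM.
have hQM : sub Q M.
  move=> r [hr [n [i [t [hi ht hnt e]]]]]; apply: NNPP => hnr.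
  have ht0 := nP0 hMi hnt.
  apply: (prime_mul hMp (srX HR n hr) ht (@prime_powN M r n hMp hr hnr) hnt).
  have -> : r ^+ n * t = i by rewrite e; fld.
  by apply: hIM.
have hval : forall x y, R x -> R y -> x != 0 -> y != 0 -> loc M (y / x) \/ loc M (x / y).
  move=> x y hx hy hx0 hy0; have hyx : y / x != 0 by rewrite mulf_neq0 ?invr_eq0.
  case: (@HP M hM _ hyx) => h; [by left|right; by rewrite invf_div in h].
have hQadd : forall x y, Q x -> Q y -> Q (x + y).
  have key : forall x y, Q x -> R y -> x != 0 -> loc M (y / x) -> Q (x + y).
    move=> x y [hx [n hn]] hy hx0 hl; split; first exact: srD.
    exists n; have -> : (x + y) ^+ n = (1 + y / x) ^+ n * x ^+ n.
      by rewrite -exprMn; congr (_ ^+ _); fld.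
    apply: hILMl => //; apply: loc_pow => //; apply: loc_add => //.
    by apply: loc_R; [exact: tmax_not1|exact: sr1 HR].
  move=> x y hx hy.
  case: (eqVneq x 0) => [->|hx0]; first by rewrite add0r.
  case: (eqVneq y 0) => [->|hy0]; first by rewrite addr0.
  case: (hval x y (proj1 hx) (proj1 hy) hx0 hy0) => h; first exact: (key x y hx (proj1 hy) hx0 h).
  by rewrite addrC; exact: (key y x hy (proj1 hx) hy0 h).
have hQi : ideal R Q.
  split; last by move=> x [].
  split => //.
  move=> r x hr [hx [n hn]]; split; first exact: srM.
  by exists n; rewrite exprMn; apply: hILMR => //; apply: srX.
have hIQ : sub I Q by move=> i hi; split; [exact: idealR hI hi|exists 1%N; rewrite expr1; apply: hILM].
have hQp : prime_ideal R Q.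
  split => //; first exact: (not1_proper HR hQ1).
  move=> a b ha hb [hab [n hn]].
  case: (eqVneq a 0) => [->|ha0]; first by left.
  case: (eqVneq b 0) => [->|hb0]; first by right.
  case: (hval a b ha hb ha0 hb0) => h.
    right; split => //; exists (n + n)%N.
    have -> : b ^+ (n + n) = (b / a) ^+ n * (a * b) ^+ n.
      rewrite -exprMn (_ : b / a * (a * b) = b * b); last by fld.
      by rewrite exprMn exprD.
    by apply: hILMl => //; apply: loc_pow.
  left; split => //; exists (n + n)%N.
  have -> : a ^+ (n + n) = (a / b) ^+ n * (a * b) ^+ n.
    rewrite -exprMn (_ : a / b * (a * b) = a * a); last by fld.
    by rewrite exprMn exprD.
  by apply: hILMl => //; apply: loc_pow.
exists Q; split.
  split => // Q' hQ' hIQ' hQ'Q r [hr [n [i [t [hi ht hnt e]]]]].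
  have ht0 := nP0 hMi hnt.
  have hQ't : ~ Q' t by move=> /hQ'Q /hQM.
  apply: (@prime_pow Q' r n hQ' hr).
  apply: (prime_cancel hQ' (srX HR n hr) ht _ hQ't).
  have -> : r ^+ n * t = i by rewrite e; fld.
  by apply: hIQ'.
move=> s i hs hns hi.
have hRi := idealR hI hi.
case: (eqVneq i 0) => [->|hi0]; first by rewrite mul0r; apply: loc0; exact: tmax_not1.
have hs0 : s != 0 by apply/eqP => e; apply: hns; rewrite e.
case: (hval s i hs hRi hs0 hi0) => // h.
exfalso; apply: hns; split => //; exists 1%N; rewrite expr1.
have -> : s = (s / i) * i by fld.
by apply: hILMl => //; apply: hILM.
Qed.

Lemma inv_in_loc' P x : prime_ideal R P -> valuation_domain (loc P) -> ~ loc P x ->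
  exists q s, [/\ R q, R s, P q, ~ P s & x * q = s] /\ x != 0.
Proof.
move=> hP hval hx.
have hx0 : x != 0 by apply/eqP => e; apply: hx; rewrite e; apply: loc0; apply: prime_not1.
case: (hval _ hx0) => // -[q [s [hq hs hns e]]].
have hs0 := nP0 (prime_ideal_ideal hP) hns.
have hxq : x * q = s.
  have -> : q = x^-1 * s by rewrite e; fld.
  by fld.
exists q, s; split => //; split => //.
apply: NNPP => nq; apply: hx; exists s, q; split => //.
have hq0 := nP0 (prime_ideal_ideal hP) nq.
by rewrite -hxq; fld.
Qed.

Lemma part1 I : strong R I -> t_ideal R I ->
  seteq (Eend I) (cap (S_min R I) (T_off R I)).
Proof.
move=> hs hIt; have hE := strong_E hs; have [hI hInz _] := hIt.
move=> x; split.
  move=> hx; split.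
    move=> P hmin; have [hPp hIP _] := hmin.
    have [M [hM hPM]] := min_in_tmax hIt hmin.
    apply: NNPP => hn.
    have [q [s [[hq hs' hPq hns hxq] hx0]]] := inv_in_loc' hPp (loc_val hM hPM) hn.
    have [sg [n [hsg hnsg hsgI]]] := minchar hI hmin hPq.
    have := Eend_pow n hx hsgI.
    have -> : x ^+ n * (sg * q ^+ n) = sg * s ^+ n by rewrite -hxq exprMn; ring.
    move=> /hIP /(prime_cancel hPp hsg (srX HR n hs')) h.
    by apply: (@prime_powN P s n hPp hs' hns); apply: NNPP => h'; apply: hnsg; apply: h.
  move=> M hM hn; apply: (colon_T (A := I)) => //; [by case: hI|exact: tmax_ideal|by apply/hE].
case=> hS hT; apply/hE => b hb; apply: loc_all => M hM.
case: (classic (sub I M)) => hIM.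
  have [Q [hQ hQloc]] := rad_min hM hI hIM.
  have [c [s [hc hs' hns ->]]] := hS Q hQ.
  have -> : c / s * b = c * (b / s) by ring.
  by apply: loc_Rmul; [exact: tmax_prime|by []|apply: hQloc].
rewrite mulrC; apply: loc_Rmul; [exact: tmax_prime|exact: idealR hI hb|exact: hT].
Qed.

Definition Xs (P : K -> Prop) (L : seq K) : K -> Prop := fun r =>
  R r /\ forall M, t_max R M -> ~ sub P M -> (forall a, a \in L -> M a) -> M r.

Lemma Xs_t P L p0 : p0 \in L -> p0 != 0 -> R p0 -> t_ideal R (Xs P L) /\ radical R (Xs P L).
Proof.
move=> hp0 hp00 hRp0.
have hXi : ideal R (Xs P L).
  split; last by move=> x [].
  split.
  - by split; [exact: sr0 HR|move=> M hM _ _; exact: ideal0 (tmax_ideal hM)].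
  - move=> x y [hx hx'] [hy hy']; split; first exact: srD.
    by move=> M hM hn hL; exact: idealD (tmax_ideal hM) (hx' M hM hn hL) (hy' M hM hn hL).
  - move=> r x hr [hx hx']; split; first exact: srM.
    by move=> M hM hn hL; exact: idealM (tmax_ideal hM) hr (hx' M hM hn hL).
have hnz : nonzero (Xs P L).
  by exists p0; split => //; split => // M hM hn hL; apply: hL.
split; last first.
  move=> x n hx [hxn hxn']; split => // M hM hn hL.
  exact: (@prime_pow M x n (tmax_prime hM) hx (hxn' M hM hn hL)).
split => // x; split; first by apply: t_ext.
move=> /tclos_span [s [hsnz hs hx]]; split.
  by apply: (v_subD (J := spn R s)) => // z /hs [].
move=> M hM hn hL; apply: (t_closed (tmax_t hM) hsnz _ hx).
by move=> z /hs [_ h]; apply: h.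
Qed.

Lemma acc_lemma P : acc_radical_t R -> t_prime R P ->
  exists L : seq K, (forall x, x \in L -> P x) /\
    forall M, t_max R M -> ~ sub P M -> exists a, a \in L /\ ~ M a.
Proof.
move=> hacc hP; have hPi := tprime_ideal hP.
have [p0 [hp0 hp00]] := tprime_nz hP; have hRp0 := idealR hPi hp0.
apply: NNPP => hn.
have H : forall L : seq K, (forall x, x \in L -> P x) ->
    exists M, [/\ t_max R M, ~ sub P M & forall a, a \in L -> M a].
  move=> L hL; apply: NNPP => hM; apply: hn; exists L; split => // M hM' hnM.
  apply: NNPP => hna; apply: hM; exists M; split => // a ha.
  by apply: NNPP => hMa; apply: hna; exists a.
have hex : forall L : seq K, exists a, (forall x, x \in L -> P x) ->
    P a /\ ~ Xs P (p0 :: L) a.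
  move=> L; case: (classic (forall x, x \in L -> P x)) => hL; last by exists 0.
  have hL' : forall x, x \in p0 :: L -> P x by move=> x; rewrite inE => /orP [/eqP ->|/hL].
  have [M [hM hnM hML]] := H _ hL'.
  apply: NNPP => hna; suff : sub P M by []. move=> p hp; apply: NNPP => hMp.
  apply: hna; exists p => _; split => // -[_ h]; apply: hMp; exact: (h M hM hnM hML).
pose g := fun L => proj1_sig (constructive_indefinite_description _ (hex L)).
have hg : forall L, (forall x, x \in L -> P x) -> P (g L) /\ ~ Xs P (p0 :: L) (g L).
  by move=> L; rewrite /g; case: constructive_indefinite_description.
pose Ls := nat_rect (fun _ => seq K) [::] (fun _ L => g L :: L).
have hLs : forall n x, x \in Ls n -> P x.
  elim=> [//|n IH] x; rewrite /= inE => /orP [/eqP ->|/IH //].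
  by case: (hg _ IH).
have [||N hN] := hacc (fun n => Xs P (p0 :: Ls n)).
- by move=> n; apply: (@Xs_t P _ p0) => //; rewrite inE eqxx.
- move=> n x [hx hx']; split => // M hM hnM hL; apply: hx' => // a.
  rewrite inE => /orP [/eqP ->|ha]; apply: hL; first by rewrite inE eqxx.
  by rewrite inE /= inE ha !orbT.
have := hN N.+1 (leqnSn N) (g (Ls N)); case=> h _.
have := hg _ (hLs N); case=> hPg hng; apply: hng; apply: h.
split; first exact: idealR hPi hPg.
by move=> M hM hnM hL; apply: hL; rewrite /= !inE eqxx orbT.
Qed.

Lemma part3 P : acc_radical_t R -> t_prime R P -> ~ t_invertible R P -> t_max (Eend P) P.
Proof.
move=> hacc hP hni.
have hPi := tprime_ideal hP; have hPp := tprime_prime hP; have hP1 := tprime_not1 hP.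
have [hEc hcap] := part2 hP hni.
pose E := Eend P.
have hPsub : forall x y, P x -> P y -> P (x - y).
  by move=> x y hx hy; apply: idealD => //; rewrite -mulN1r; exact: (idealM hPi (srN HR (sr1 HR)) hy).
have hES : is_subring E.
  split.
  - by move=> b hb; rewrite mul0r; exact: ideal0 hPi.
  - by move=> b hb; rewrite mul1r.
  - by move=> x y hx hy b hb; rewrite mulrBl; apply: hPsub; [apply: hx|apply: hy].
  - by move=> x y hx hy b hb; rewrite -mulrA; apply: hx; apply: hy.
have hRE : sub R E by move=> r hr b hb; exact: idealM hPi hr hb.
have hPE : sub P E by move=> p hp b hb; exact: idealM hPi (idealR hPi hp) hb.
have hEl : forall x, E x -> loc P x /\ T_off R P x by move=> x /hEc /hcap [].
have hlE : forall x, loc P x -> T_off R P x -> E x by move=> x h1 h2; apply/hEc/hcap.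
have hPiE : ideal E P.
  split => //; split.
  - exact: ideal0 hPi.
  - by move=> x y; apply: idealD.
  - by move=> r x hr hx; apply: hr.
have hPnz := tprime_nz hP.
have hEPR : forall y b t, E y -> R b -> R t -> P b -> ~ P t -> y = b / t -> P y.
  move=> y b t hy hb ht hPb hnt e.
  have hRy : R y.
    apply: loc_all => M hM; case: (classic (sub P M)) => hPM.
      rewrite e mulrC; apply: (locP_M hPp hM hPM) => //; exact: loc_inv.
    by case: (hEl _ hy) => _; apply.
  have ht0 := nP0 hPi hnt.
  apply: (prime_cancel hPp hRy ht _ hnt).
  by rewrite e; have -> : b / t * t = b by fld.
have hunit : forall y, E y -> ~ P y -> y != 0 /\ loc P y^-1.
  move=> y hy hny; have [[b [t [hb ht hnt e]]] _] := hEl _ hy.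
  have hnb : ~ P b by move=> hPb; apply: hny; exact: hEPR hy hb ht hPb hnt e.
  have hb0 := nP0 hPi hnb; have ht0 := nP0 hPi hnt.
  split; first by rewrite e mulf_neq0 ?invr_eq0.
  by exists t, b; split => //; rewrite e invf_div.
have [L [hLP hLM]] := acc_lemma hacc hP.
have hLR : forall x, x \in L -> R x by move=> x /hLP; apply: idealR hPi.
have hinE : forall w, loc P w -> (forall a, a \in L -> R (w * a)) -> E w.
  move=> w hw hwa; apply: hlE => // M hM hnM.
  have [a [ha hMa]] := hLM M hM hnM.
  have ha0 := nP0 (tmax_ideal hM) hMa.
  have -> : w = (w * a) * a^-1 by fld.
  apply: loc_mul; [exact: tmax_prime|apply: loc_R; [exact: tmax_not1|exact: hwa]|].
  by apply: loc_inv => //; [exact: tmax_prime|exact: hLR].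
split.
- split => //.
  move=> x; split; first by apply: (t_ext hES).
  move=> /tclos_span [s [hsnz hsP hz]]; apply: NNPP => hnz.
  have hEz : E x by apply: (v_subD (J := spn E s)) => // y /hsP; apply: hPE.
  have [hz0 hzi] := hunit _ hEz hnz.
  pose s' := s ++ L.
  have hs'P : forall y, y \in s' -> P y.
    move=> y; rewrite mem_cat => /orP [hy|/hLP //].
    by apply: hsP; apply: (span_mem hES).
  have hs'R : forall y, y \in s' -> R y by move=> y /hs'P; apply: idealR hPi.
  have hz' : vclos E (spn E s') x.
    by move: hz; apply: v_mono; apply: (span_cat_l hES).
  have hESm : submodule E E by split; [exact: (sr0 hES)|move=> a b ha hb; exact: (srD hES ha hb)|move=> a b ha hb; exact: (srM hES ha hb)].
  have hGc : sub (colon R (spn R s')) (colon R P).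
    move=> w hw; apply/hcap.
    have hw' := proj1 (colon_span HR _ _ submod_self) hw.
    have hwE : colon E (spn E s') w.
      by apply/(colon_span hES _ _ hESm) => y hy; apply: hRE; apply: hw'.
    have hzw : E (x * w) := hz' w hwE.
    have hlw : loc P w.
      have -> : w = x^-1 * (x * w) by fld.
      by apply: loc_mul => //; case: (hEl _ hzw).
    have hwa : forall a, a \in L -> R (w * a).
      by move=> a ha; apply: hw'; rewrite mem_cat ha orbT.
    by case: (hEl _ (hinE w hlw hwa)).
  have hGnz : nonzero (spn R s').
    have [y [hy hy0]] := span_nz hES hsnz.
    by exists y; split => //; apply: (span_mem HR); rewrite mem_cat hy.
  have h1 := fg_tinv hs'R hGnz.
  apply: hni; apply: tinv_of1 => //.
  move: h1; apply: t_mono; apply: prod_mono => //.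
  by apply: span_sub => //; case: hPi.
- exact: (not1_proper hES hP1).
- move=> J hJ hJp hPJ y hy; apply: NNPP => hny.
  have [[hJm hJE] _ _] := hJ.
  have hEy := hJE y hy.
  have [hy0 hyi] := hunit _ hEy hny.
  have hFJ : sub (spn E (y :: L)) J.
    apply: span_sub => // z; rewrite inE => /orP [/eqP -> //|hz].
    by apply: hPJ; apply: hLP.
  have hFnz : nonzero (spn E (y :: L)).
    by exists y; split => //; apply: (span_mem hES); rewrite inE eqxx.
  have hESm : submodule E E by split; [exact: (sr0 hES)|move=> a b ha hb; exact: (srD hES ha hb)|move=> a b ha hb; exact: (srM hES ha hb)].
  have h1 : vclos E (spn E (y :: L)) 1.
    move=> b hb; rewrite mul1r.
    have hb' := proj1 (colon_span hES _ _ hESm) hb.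
    have hby : E (b * y) by apply: hb'; rewrite inE eqxx.
    have hlb : loc P b.
      have -> : b = (b * y) * y^-1 by fld.
      by apply: loc_mul => //; case: (hEl _ hby).
    apply: hlE => // M hM hnM.
    have [a [ha hMa]] := hLM M hM hnM.
    have ha0 := nP0 (tmax_ideal hM) hMa.
    have hba : E (b * a) by apply: hb'; rewrite inE ha orbT.
    have -> : b = (b * a) * a^-1 by fld.
    apply: loc_mul; [exact: tmax_prime| |].
      by case: (hEl _ hba) => _; apply.
    by apply: loc_inv => //; [exact: tmax_prime|exact: hLR].
  have hJ1 : J 1 := t_closed hJ hFnz hFJ h1.
  exact: (proper_not1 (conj hJm hJE) hJp hJ1).
Qed.

End RR.

Theorem proposition1p6 (K : fieldType) (R : K -> Prop)
  (HR : is_subring R) (HK : is_quotient_field R) (HKR : exists x, ~ R x)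
  (HP : PvMD R) :
  (forall I, strong R I -> t_ideal R I ->
     seteq (Eend I) (cap (S_min R I) (T_off R I)))
  /\
  (forall P, t_prime R P -> ~ t_invertible R P ->
     seteq (Eend P) (colon R P) /\
     seteq (colon R P) (cap (localization R P) (T_off R P)))
  /\
  (acc_radical_t R ->
   forall P, t_prime R P -> ~ t_invertible R P -> t_max (Eend P) P).
Proof.
split; first by move=> I; apply: part1.
split; first by move=> P; apply: part2.
by move=> hacc P; apply: part3.
Qed.
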